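(* Let $T$ be a rooted tree on vertex set $[n]$ and let $p\in[n]^n$ be a prime parking function on $T$. Then the final driver (driver $n$) parks at the root of $T$.
   Context: Edges of $T$ are oriented towards the root. For $p\in[n]^n$, drivers $1,\dots,n$ arrive in order; driver $i$ parks at $p_i$ if unoccupied, otherwise follows the directed path towards the root and parks at the first unoccupied vertex, leaving if none exists. $(T,p)$ is a parking function if all drivers park. $T_v$ is the set of vertices with a directed path to $v$ (including $v$); the parking function $(T,p)$ is prime if $|T_v|<|\{i:p_i\in T_v\}|$ for every non-root vertex $v$. *)

(* Defs.v *)
From mathcomp Require Import all_boot.
Set Implicit Arguments. Unset Strict Implicit. Unset Printing Implicit Defensive.

(* A rooted tree on vertex set [n] (encoded as 'I_n) is given by its root r
   and its parent map par : each non-root vertex v has the directed edge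
   v -> par v (edges oriented towards the root); par r = r is a dummy
   self-loop at the root, and every vertex reaches the root. *)
Definition rooted_tree (n : nat) (par : 'I_n -> 'I_n) (r : 'I_n) : Prop :=
  par r = r /\ forall v : 'I_n, fconnect par v r.

Definition subtree (n : nat) (par : 'I_n -> 'I_n) (v : 'I_n) : {set 'I_n} :=
  [set u | fconnect par u v].

(* Spot where a driver preferring v parks given occupied set occ:
   the first unoccupied vertex along the directed path v, par v, ..., root
   (orbit par v), or None if all are occupied (the driver leaves). *)
Definition park_spot (n : nat) (par : 'I_n -> 'I_n) (occ : {set 'I_n}) (v : 'I_n)
  : option 'I_n :=
  ohead [seq u <- orbit par v | u \notin occ].

Definition park_step (n : nat) (par : 'I_n -> 'I_n)
  (st : {set 'I_n} * seq (option 'I_n)) (a : 'I_n) :=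
  let o := park_spot par st.1 a in
  (if o is Some w then w |: st.1 else st.1, rcons st.2 o).

(* outcomes par p : the list, in driver order 1..n (indices 0..n-1), of the
   spots where the drivers park (None = driver leaves). *)
Definition outcomes (n : nat) (par : 'I_n -> 'I_n) (p : 'I_n -> 'I_n)
  : seq (option 'I_n) :=
  (foldl (park_step par) (set0, [::]) [seq p i | i <- enum 'I_n]).2.

Definition parking_function (n : nat) (par : 'I_n -> 'I_n) (p : 'I_n -> 'I_n) : Prop :=
  all (fun o => o != None) (outcomes par p).

Definition prime_parking_function (n : nat) (par : 'I_n -> 'I_n) (r : 'I_n)
  (p : 'I_n -> 'I_n) : Prop :=
  parking_function par p /\
  forall v : 'I_n, v != r ->
    #|subtree par v| < #|[set i : 'I_n | p i \in subtree par v]|.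

(* Main.v *)
Require Import Defs.
From mathcomp Require Import all_boot zify.
Set Implicit Arguments. Unset Strict Implicit. Unset Printing Implicit Defensive.

Lemma traject_fconnect (T : finType) (f : T -> T) x k y :
  y \in traject f x k -> fconnect f x y.
Proof. by case/trajectP=> i _ ->; apply: fconnect_iter. Qed.

Lemma traject_first (T : finType) (f : T -> T) (P : pred T) k x y w :
  ohead [seq u <- traject f x k | P u] = Some y ->
  w \in traject f x k -> P w -> fconnect f y w.
Proof.
elim: k x => [|k IH] x //=.
case Px: (P x) => /=.
  by case=> <- Hw _; exact: (@traject_fconnect _ f x k.+1 w Hw).
move=> Hh; rewrite in_cons => /orP[/eqP Ew|Hw] Pw.
  by rewrite Ew Px in Pw.
exact: IH Hh Hw Pw.
Qed.

Lemma spot_notin n (par : 'I_n -> 'I_n) occ v y :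
  park_spot par occ v = Some y -> y \notin occ.
Proof.
rewrite /park_spot.
have: all (fun u => u \notin occ) [seq u <- orbit par v | u \notin occ].
  by apply/allP => u; rewrite mem_filter => /andP[].
by case: [seq _ <- _ | _] => //= a s /andP[H _] [<-].
Qed.

Lemma spot_sub n (par : 'I_n -> 'I_n) occ v y w :
  park_spot par occ v = Some y -> fconnect par v w -> w \notin occ ->
  fconnect par y w.
Proof.
rewrite /park_spot fconnect_orbit /orbit => H Hw Pw.
exact: (traject_first H Hw Pw).
Qed.

Lemma invariant n (par : 'I_n -> 'I_n) (w : 'I_n) (t : seq 'I_n) :
  let st := foldl (park_step par) (set0, [::]) t in
  w \notin st.1 -> all (fun o => o != None) st.2 ->
  count (mem (subtree par w)) t <= #|st.1 :&: subtree par w|.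
Proof.
elim/last_ind: t => [|t a IH] //=.
rewrite /= foldl_rcons; set st := foldl _ _ t; rewrite /park_step /= all_rcons -cats1 count_cat.
case E: (park_spot par st.1 a) => [y|] //= Hw Hall.
have Hwst : w \notin st.1 by apply: contra Hw; rewrite in_setU1 orbC => ->.
have IH' := IH Hwst Hall.
have Hy := spot_notin E.
case Ha: (a \in subtree par w) => /=.
  have Hyw : y \in subtree par w.
    rewrite inE; apply: (spot_sub E) => //; by move: Ha; rewrite inE.
  rewrite setIUl (setIidPl _); last by rewrite sub1set.
  rewrite cardsU1 inE (negbTE Hy) /= addn1 ltnS //.
rewrite !addn0; apply: (leq_trans IH'); apply: subset_leq_card.
by apply: setSI; apply/subsetP => u; rewrite in_setU1 orbC => ->.
Qed.

Theorem proposition4p3 (n : nat) (par : 'I_n -> 'I_n) (r : 'I_n)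
  (p : 'I_n -> 'I_n) :
  rooted_tree par r -> prime_parking_function par r p ->
  last None (outcomes par p) = Some r.
Proof.
move=> [Hr Hroot] [Hpf Hprime].
move: Hpf; rewrite /parking_function /outcomes.
have Hcnt : forall A : {set 'I_n}, #|[set i : 'I_n | p i \in A]| = count (mem A) [seq p i | i <- enum 'I_n].
  move=> A; rewrite count_map cardE /enum_mem size_filter count_filter; apply: eq_count => i.
  by rewrite /= !inE andbT.
have Hs : size [seq p i | i <- enum 'I_n] = n by rewrite size_map size_enum_ord.
move: Hcnt Hs.
case/lastP: [seq p i | i <- enum 'I_n] => [|t a] Hcnt Hs.
  by move=> _; have := ltn_ord r; rewrite -{2}Hs.
rewrite foldl_rcons; set st := foldl _ _ t; rewrite /park_step /= all_rcons last_rcons.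
case E: (park_spot par st.1 a) => [x|] //= Hall.
apply/eqP; apply/negPn/negP => Hxr.
have Hx := spot_notin E.
have Hinv : count (mem (subtree par x)) t <= #|st.1 :&: subtree par x| := invariant Hx Hall.
have := Hprime x Hxr; rewrite Hcnt -cats1 count_cat.
have Hxin : x \in subtree par x by rewrite inE; apply: connect0.
have : #|st.1 :&: subtree par x| <= #|subtree par x :\ x|.
  apply: subset_leq_card; apply/subsetP => u; rewrite !inE => /andP[Hu ->].
  by rewrite andbT; apply: contraNneq Hx => <-.
rewrite (cardsD1 x (subtree par x)) Hxin add1n /=.
move=> H2; have := leq_trans Hinv H2; case: (a \in _); rewrite /= ?addn1 ?addn0; move: (count _ _) (#|subtree par x :\ x|) => c s; lia.
Qed.
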